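(* Let $\mathbf{A}$ be a finite algebra with a Mal'cev term and let $0\in A$. Then $\mathbf{A}$ is supernilpotent if and only if there is a positive integer $d$ such that for every $m$, every polynomial $f(x_1,\ldots,x_m)\in\operatorname{Pol}_m(\mathbf{A})$ and every tuple $\bar r\in A^m$ there is an index set $T\subseteq[m]$ with $|T|\le d$ and $f(\bar r)=f(\bar r_T)$.
   Context: A Mal'cev term $m$ satisfies $m(y,x,x)=m(x,x,y)=y$. $\operatorname{Pol}_m(\mathbf{A})$ is the set of $m$-ary polynomial operations of $\mathbf{A}$. For congruences $\alpha_1,\ldots,\alpha_n$, the higher commutator $[\alpha_1,\ldots,\alpha_n]$ is the smallest congruence $\delta$ such that for all polynomials $f(\bar x_1,\ldots,\bar x_n)$ and tuples $\bar a_i\equiv_{\alpha_i}\bar b_i$: if $f(\bar a_1,\bar x_2,\ldots,\bar x_n)\equiv_\delta f(\bar b_1,\bar x_2,\ldots,\bar x_n)$ for all $(\bar x_2,\ldots,\bar x_n)\in\prod_{i=2}^n\{\bar a_i,\bar b_i\}\setminus\{(\bar b_2,\ldots,\bar b_n)\}$, then $f(\bar a_1,\bar b_2,\ldots,\bar b_n)\equiv_\delta f(\bar b_1,\bar b_2,\ldots,\bar b_n)$. $\mathbf{A}$ is supernilpotent if $[\mathbf{1}_A,\ldots,\mathbf{1}_A]$ (with $n+1$ entries) equals the identity relation $\mathbf{0}_A$ for some $n$. $[m]=\{1,\ldots,m\}$; $\bar r_T$ is the $m$-tuple with $i$-th entry $r_i$ if $i\in T$ and $0$ otherwise. *)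

(* Defs.v *)
From mathcomp Require Import all_boot.
Set Implicit Arguments. Unset Strict Implicit. Unset Printing Implicit Defensive.

Record alg (A : Type) := Alg {
  sym : Type;
  arity : sym -> nat;
  op : forall i : sym, ('I_(arity i) -> A) -> A
}.

Inductive term (A : Type) (Al : alg A) (V : Type) : Type :=
| Var : V -> term Al V
| App : forall i : sym Al, ('I_(arity i) -> term Al V) -> term Al V.

Fixpoint eval (A : Type) (Al : alg A) (V : Type) (env : V -> A) (t : term Al V) : A :=
  match t with
  | Var v => env v
  | App i ts => @op A Al i (fun j => eval env (ts j))
  end.

(* Polynomial operations with variables indexed by V: term operations in which
   constants from A may be substituted (variables of type V + A). *)
Definition is_pol (A : Type) (Al : alg A) (V : Type) (f : (V -> A) -> A) : Prop :=
  exists t : term Al (V + A),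
    forall x : V -> A,
      f x = eval (fun v => match v with inl u => x u | inr c => c end) t.

Definition Pol (A : Type) (Al : alg A) (m : nat) (f : ('I_m -> A) -> A) : Prop :=
  is_pol Al f.

Definition env3 (A : Type) (x y w : A) : 'I_3 -> A :=
  fun i => match nat_of_ord i with 0 => x | 1 => y | _ => w end.

Definition has_malcev (A : Type) (Al : alg A) : Prop :=
  exists m : term Al 'I_3,
    forall x y : A, eval (env3 y x x) m = y /\ eval (env3 x x y) m = y.

Definition is_cong (A : Type) (Al : alg A) (R : A -> A -> Prop) : Prop :=
  [/\ forall x, R x x,
      forall x y, R x y -> R y x,
      forall x y z, R x y -> R y z -> R x z &
      forall (i : sym Al) (x y : 'I_(arity i) -> A),
        (forall j, R (x j) (y j)) -> R (@op A Al i x) (@op A Al i y)].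

Definition sel (A : Type) (n : nat) (k : 'I_n.+1 -> nat)
  (a b : forall i : 'I_n.+1, 'I_(k i) -> A) (s : 'I_n.+1 -> bool)
  : {i : 'I_n.+1 & 'I_(k i)} -> A :=
  fun v => if s (tag v) then b (tag v) (tagged v) else a (tag v) (tagged v).

Definition upd0 (n : nat) (s : 'I_n.+1 -> bool) (c : bool) : 'I_n.+1 -> bool :=
  fun i => if i == ord0 then c else s i.

(* Term condition: delta satisfies the condition in the definition of
   [alpha_0, ..., alpha_n] (blocks indexed 0..n, block 0 is the "first" one). *)
Definition TC (A : Type) (Al : alg A) (n : nat) (alpha : 'I_n.+1 -> A -> A -> Prop)
  (delta : A -> A -> Prop) : Prop :=
  forall (k : 'I_n.+1 -> nat) (f : ({i : 'I_n.+1 & 'I_(k i)} -> A) -> A),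
    is_pol Al f ->
    forall a b : forall i : 'I_n.+1, 'I_(k i) -> A,
      (forall i j, alpha i (a i j) (b i j)) ->
      (forall s : 'I_n.+1 -> bool,
          (exists i : 'I_n.+1, i != ord0 /\ s i = false) ->
          delta (f (sel a b (upd0 s false))) (f (sel a b (upd0 s true)))) ->
      delta (f (sel a b (fun i => i != ord0))) (f (sel a b (fun _ => true))).

Definition hcomm (A : Type) (Al : alg A) (n : nat) (alpha : 'I_n.+1 -> A -> A -> Prop)
  : A -> A -> Prop :=
  fun x y => forall delta, is_cong Al delta -> TC Al alpha delta -> delta x y.

Definition full_rel (A : Type) : A -> A -> Prop := fun _ _ => True.

(* Supernilpotent: [1_A, ..., 1_A] (n+1 entries) = 0_A for some n. *)
Definition supernilpotent (A : Type) (Al : alg A) : Prop :=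
  exists n : nat, forall x y : A,
    hcomm Al (fun _ : 'I_n.+1 => @full_rel A) x y <-> x = y.

(* r_T : entries r_i for i in T, and 0 (= z) otherwise. *)
Definition restr (A : Type) (m : nat) (z : A) (r : 'I_m -> A) (T : {set 'I_m}) : 'I_m -> A :=
  fun i => if i \in T then r i else z.

(* Main.v *)
Require Import Defs.
From mathcomp Require Import all_boot zify.
From Stdlib Require Import FunctionalExtensionality IndefiniteDescription.
Set Implicit Arguments. Unset Strict Implicit. Unset Printing Implicit Defensive.


Section Pols.
Variables (A : Type) (Al : alg A).

Fixpoint tsubst (V W : Type) (s : V -> term Al W) (t : term Al V) : term Al W :=
  match t with
  | Var v => s v
  | App i ts => App (fun j => tsubst s (ts j))
  end.

Lemma eval_tsubst V W (s : V -> term Al W) (env : W -> A) t :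
  eval env (tsubst s t) = eval (fun v => eval env (s v)) t.
Proof.
elim: t => [v|i ts IH] //=.
by f_equal; apply: functional_extensionality => j; apply: IH.
Qed.

Definition penv V (x : V -> A) : V + A -> A :=
  fun v => match v with inl u => x u | inr c => c end.

Lemma pol_comp V W (g : (V -> A) -> A) (s : V -> (W -> A) -> A) :
  is_pol Al g -> (forall v, is_pol Al (s v)) -> is_pol Al (fun y => g (fun v => s v y)).
Proof.
move=> [t ht] hs.
pose T := fun v => proj1_sig (constructive_indefinite_description _ (hs v)).
have hT : forall v y, s v y = eval (penv y) (T v).
  by move=> v; exact: (proj2_sig (constructive_indefinite_description _ (hs v))).
exists (tsubst (fun u => match u with inl v => T v | inr c => Var Al (inr c) end) t).
move=> y; rewrite eval_tsubst ht; f_equal.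
by apply: functional_extensionality => -[v|c] //=; rewrite hT.
Qed.

Lemma pol_proj V (v : V) : is_pol Al (fun x : V -> A => x v).
Proof. by exists (Var Al (inl v)). Qed.

Lemma pol_const V (c : A) : is_pol Al (fun _ : V -> A => c).
Proof. by exists (Var Al (inr c)). Qed.

Lemma pol_term3 (mt : term Al 'I_3) : is_pol Al (fun x : 'I_3 -> A => eval x mt).
Proof. by exists (tsubst (fun i => Var Al (inl i)) mt) => x; rewrite eval_tsubst. Qed.

Lemma pol_M (mt : term Al 'I_3) V (g1 g2 g3 : (V -> A) -> A) :
  is_pol Al g1 -> is_pol Al g2 -> is_pol Al g3 ->
  is_pol Al (fun x => eval (env3 (g1 x) (g2 x) (g3 x)) mt).
Proof.
move=> h1 h2 h3.
have := pol_comp (pol_term3 mt) (s := fun i y => env3 (g1 y) (g2 y) (g3 y) i).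
apply => i; rewrite /env3; by case: (nat_of_ord i) => [|[|j]].
Qed.

End Pols.


Section Back.
Variables (A : Type) (Al : alg A) (mt : term Al 'I_3).
Hypothesis hm : forall x y : A, eval (env3 y x x) mt = y /\ eval (env3 x x y) mt = y.
Definition M x y w := eval (env3 x y w) mt.
Lemma M1 x y : M y x x = y. Proof. exact: (hm x y).1. Qed.
Lemma M2 x y : M x x y = y. Proof. exact: (hm x y).2. Qed.

Variables (n : nat) (k : 'I_n.+1 -> nat).
Local Notation V := {i : 'I_n.+1 & 'I_(k i)}.
Variables (a b : forall i : 'I_n.+1, 'I_(k i) -> A).

Definition ov (i : 'I_n.+1) (x : V -> A) : V -> A :=
  fun v => if tag v == i then @a (tag v) (tagged v) else x v.

Lemma ov_sel i s : ov i (sel a b s) = sel a b (fun j => if j == i then false else s j).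
Proof. by apply: functional_extensionality => v; rewrite /ov /sel; case: (tag v == i). Qed.

Lemma ov_ov i x : ov i (ov i x) = ov i x.
Proof. by apply: functional_extensionality => v; rewrite /ov; case: (tag v == i). Qed.

Lemma ov_comm i j x : ov i (ov j x) = ov j (ov i x).
Proof.
by apply: functional_extensionality => v; rewrite /ov; case: (tag v == i); case: (tag v == j).
Qed.

Lemma pol_ov i (g : (V -> A) -> A) : is_pol Al g -> is_pol Al (fun x => g (ov i x)).
Proof.
move=> hg; apply: (pol_comp hg (s := fun v x => ov i x v)) => v.
rewrite /ov; case: (tag v == i); [exact: pol_const | exact: pol_proj].
Qed.

Variable f : (V -> A) -> A.
Hypothesis hf : is_pol Al f.
Hypothesis hyp : forall s, (exists i, i != ord0 /\ s i = false) ->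
  f (sel a b (upd0 s false)) = f (sel a b (upd0 s true)).
Definition cc := f (sel a b (fun i => i != ord0)).
Definition Dop i (g : (V -> A) -> A) : (V -> A) -> A := fun x => M (g x) (g (ov i x)) cc.
Definition PP := Dop ord0 f.
Definition HH := foldr Dop PP (enum 'I_n.+1).

Definition Inv (g : (V -> A) -> A) := g (sel a b (fun _ => true)) = f (sel a b (fun _ => true))
  /\ forall s, ~~ [forall i, s i] -> g (sel a b s) = cc.
Definition Abs i (g : (V -> A) -> A) := forall x, g (ov i x) = cc.

Lemma Inv_P : Inv PP.
Proof.
split.
  rewrite /PP /Dop ov_sel.
  have -> : (fun j : 'I_n.+1 => if j == ord0 then false else true) = (fun j => j != ord0).
    by apply: functional_extensionality => j; case: (j == ord0).
  by rewrite M1.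
move=> s hs; rewrite /PP /Dop ov_sel.
case h0: (s ord0).
  move/forallPn: hs => [i hi].
  have hi0 : i != ord0 by apply/eqP => e; move: hi; rewrite e h0.
  have -> : (fun j : 'I_n.+1 => if j == ord0 then false else s j) = upd0 s false by [].
  rewrite hyp; last by exists i; split => //; apply/negbTE.
  have -> : upd0 s true = s.
    by apply: functional_extensionality => j; rewrite /upd0; case: eqP => // ->.
  by rewrite M2.
have -> : (fun j : 'I_n.+1 => if j == ord0 then false else s j) = s.
  by apply: functional_extensionality => j; case: eqP => // ->.
by rewrite M2.
Qed.

Lemma Inv_D i g : Inv g -> Inv (Dop i g).
Proof.
move=> [h1 h2]; split.
  rewrite /Dop ov_sel (h2 (fun j => if j == i then false else true)) ?h1 ?M1 //.
  by apply/forallPn; exists i; rewrite eqxx.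
move=> s hs; rewrite /Dop ov_sel (h2 s) // (h2 (fun j => if j == i then false else s j)) ?M1 //.
by apply/forallPn; exists i; rewrite eqxx.
Qed.

Lemma Abs_D i g : Abs i (Dop i g).
Proof. by move=> x; rewrite /Dop ov_ov M2. Qed.

Lemma Abs_D' i j g : Abs j g -> Abs j (Dop i g).
Proof. by move=> hg x; rewrite /Dop ov_comm !hg M1. Qed.

Lemma pol_D i g : is_pol Al g -> is_pol Al (Dop i g).
Proof. move=> hg; apply: pol_M => //; [exact: pol_ov | exact: pol_const]. Qed.

Lemma HH_props : Inv HH /\ is_pol Al HH /\ forall i, Abs i HH.
Proof.
have : forall l, Inv (foldr Dop PP l) /\ is_pol Al (foldr Dop PP l) /\
   forall i, i \in l -> Abs i (foldr Dop PP l).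
  elim => [|j l [IH1 [IH2 IH3]]] /=.
    by split; [exact: Inv_P | split => //; exact: pol_D].
  split; first exact: Inv_D.
  split; first exact: pol_D.
  move=> i; rewrite inE; case: eqP => [-> _|_ /= hi]; first exact: Abs_D.
  exact: Abs_D' (IH3 _ hi).
move=> /(_ (enum 'I_n.+1)) [h1 [h2 h3]]; split => //; split => // i.
by apply: h3; rewrite mem_enum.
Qed.

Variable z : A.
Hypothesis Dp : forall m (g : ('I_m -> A) -> A), Pol Al g -> forall r : 'I_m -> A,
  exists T : {set 'I_m}, #|T| <= n /\ g r = g (restr z r T).

Definition a' (v : V) := @a (tag v) (tagged v).
Definition b' (v : V) := @b (tag v) (tagged v).
Definition ee u w v := M (M z u (a' v)) z w.

Lemma ee_zz v : ee z z v = a' v. Proof. by rewrite /ee M2 M1. Qed.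
Lemma ee_ab v : ee (a' v) (b' v) v = b' v. Proof. by rewrite /ee M1 M2. Qed.

Lemma back : f (sel a b (fun i => i != ord0)) = f (sel a b (fun _ => true)).
Proof.
have [[Hi1 _] [Hpol Habs]] := HH_props.
pose Q (y : 'I_#|{: (V + V)%type}| -> A) :=
  HH (fun v => ee (y (enum_rank (inl v))) (y (enum_rank (inr v))) v).
have hQ : Pol Al Q.
  apply: (pol_comp Hpol (s := fun v y => ee (y (enum_rank (inl v))) (y (enum_rank (inr v))) v)).
  move=> v; apply: pol_M; [|exact: pol_const|exact: pol_proj].
  by apply: pol_M; [exact: pol_const|exact: pol_proj|exact: pol_const].
pose r (j : 'I_#|{: (V + V)%type}|) := match enum_val j with inl v => a' v | inr v => b' v end.
have [T [hT hQT]] := Dp hQ r.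
have Qr : Q r = f (sel a b (fun _ => true)).
  rewrite /Q -Hi1; congr HH; apply: functional_extensionality => v.
  by rewrite /r !enum_rankK ee_ab.
pose blk (j : 'I_#|{: (V + V)%type}|) := match enum_val j with inl v => tag v | inr v => tag v end.
have [i0 hi0] : exists i0, i0 \notin [set blk j | j in T].
  apply/existsP; rewrite -negb_forall; apply/negP => /forallP hall.
  have : #|[set: 'I_n.+1]| <= #|[set blk j | j in T]|.
    by apply: subset_leq_card; apply/subsetP => x _; apply: hall.
  rewrite cardsT card_ord => h; have := leq_trans h (leq_trans (leq_imset_card _ _) hT).
  by rewrite ltnn.
set x' := (fun v => ee (restr z r T (enum_rank (inl v))) (restr z r T (enum_rank (inr v))) v).
have hx : ov i0 x' = x'.
  apply: functional_extensionality => v; rewrite /ov; case: eqP => // hv.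
  have nin : forall u, (tag u == i0) -> enum_rank (inl u) \notin T /\ enum_rank (inr u) \notin T.
    move=> u hu; split; apply/negP => hin; move/negP: hi0; apply; apply/imsetP.
      by exists (enum_rank (inl u)) => //; rewrite /blk enum_rankK (eqP hu).
    by exists (enum_rank (inr u)) => //; rewrite /blk enum_rankK (eqP hu).
  have [n1 n2] := nin v (introT eqP hv).
  by rewrite /x' /restr (negbTE n1) (negbTE n2) ee_zz.
have : Q (restr z r T) = cc by rewrite /Q -/x' -hx Habs.
by rewrite -hQT Qr => ->.
Qed.

End Back.


Section Ramsey.
Variable A : finType.

Definition homog (I : finType) (c : {set I} -> A) (H : {set I}) (l : nat) :=
  forall Y1 Y2 : {set I}, Y1 \subset H -> Y2 \subset H -> #|Y1| = l -> #|Y2| = l -> c Y1 = c Y2.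

Definition firstl (I : finType) (H : {set I}) (l : nat) : {set I} := [set x in take l (enum H)].

Lemma firstl_sub I (H : {set I}) l : firstl H l \subset H.
Proof. by apply/subsetP => x; rewrite inE => /mem_take; rewrite mem_enum. Qed.

Lemma card_firstl I (H : {set I}) l : l <= #|H| -> #|firstl H l| = l.
Proof.
move=> hl; rewrite /firstl cardsE (card_uniqP _) ?take_uniq ?enum_uniq //.
rewrite size_take -cardE; case: ltnP => // h; apply/eqP; by rewrite eqn_leq h hl.
Qed.

Definition ramseyP l := forall h, exists N, forall (I : finType) (c : {set I} -> A) (W : {set I}),
  N <= #|W| -> exists H : {set I}, H \subset W /\ h <= #|H| /\ homog c H l.

Lemma pre l : ramseyP l -> forall t, exists N, forall (I : finType) (c : {set I} -> A) (W : {set I}),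
  N <= #|W| -> exists (V : {set I}) (rho : I -> nat) (chi : I -> A), V \subset W /\ t <= #|V| /\
  forall (Y : {set I}) v, Y \subset V -> #|Y| = l.+1 -> v \in Y -> (forall y, y \in Y -> rho v <= rho y) ->
    c Y = chi v.
Proof.
move=> IHl; elim => [|t [Nt hNt]].
  exists 0 => I c W _; exists set0, (fun _ => 0), (fun _ => c set0).
  split; first exact: sub0set; split => // Y v.
  by rewrite subset0 => /eqP ->; rewrite cards0.
have [N' hN'] := IHl Nt.
exists N'.+1 => I c W hW.
have : 0 < #|W| by apply: leq_trans hW.
move/card_gt0P => [v hv].
have hW' : N' <= #|W :\ v| by move: hW; rewrite (cardsD1 v W) hv.
have [H [hHW [hH hom]]] := hN' I (fun Y => c (v |: Y)) (W :\ v) hW'.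
have [V' [rho' [chi' [hV'H [hV' hc']]]]] := hNt I c H hH.
have sV'W : V' \subset W :\ v := subset_trans hV'H hHW.
exists (v |: V'), (fun x => if x == v then 0 else (rho' x).+1),
  (fun x => if x == v then c (v |: firstl H l) else chi' x).
have vV' : v \notin V'.
  by apply/negP => h; have := subsetP sV'W v h; rewrite !inE eqxx.
split.
  apply/subsetP => x; rewrite in_setU1; case/orP => [/eqP->//|h].
  by have := subsetP sV'W x h; rewrite !inE => /andP [].
split; first by rewrite cardsU1 vV'.
move=> Y u hY hYc hu hmin.
case: (boolP (v \in Y)) => vY.
  have uv : u = v.
    apply/eqP; apply/negPn/negP => /negbTE uv; have := hmin v vY; by rewrite uv eqxx.
  subst u; rewrite eqxx.
  have hY' : Y :\ v \subset H.
    apply/subsetP => x; rewrite !inE => /andP [xv xY]; have := subsetP hY x xY.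
    rewrite in_setU1 (negbTE xv) /= => h; exact: subsetP hV'H x h.
  have cY' : #|Y :\ v| = l by move: hYc; rewrite (cardsD1 v Y) vY add1n => -[].
  rewrite -(setD1K vY); apply: hom => //; first exact: firstl_sub.
  by apply: card_firstl; rewrite -cY'; exact: subset_leq_card.
have hYV : Y \subset V'.
  apply/subsetP => x xY; have := subsetP hY x xY; rewrite in_setU1; case/orP => // /eqP e.
  by move: vY; rewrite -e xY.
have nv : forall y, y \in Y -> (y == v) = false.
  by move=> y yY; apply/negbTE; apply/negP => /eqP e; move: vY; rewrite -e yY.
rewrite (nv u hu); apply: hc' => // y yY.
by have := hmin y yY; rewrite (nv u hu) (nv y yY) ltnS.
Qed.

Lemma ramsey l : ramseyP l.
Proof.
elim: l => [|l IHl] h.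
  exists h => I c W hW; exists W; split => //; split => // Y1 Y2 _ _ /eqP.
  by rewrite cards_eq0 => /eqP -> /eqP; rewrite cards_eq0 => /eqP ->.
have [N hN] := pre IHl (#|A| * h).
exists N => I c W hW.
have [V [rho [chi [hVW [hV hc]]]]] := hN I c W hW.
have [a ha] : exists a, h <= #|[set x in V | chi x == a]|.
  case: (pickP [pred a | h <= #|[set x in V | chi x == a]|]) => [a ha|hn]; first by exists a.
  exfalso; case: (posnP h) => [h0|hpos]; first by have := hn (c set0); rewrite /= h0.
  have : #|V| <= #|A| * h.-1.
    rewrite -sum1_card (partition_big chi predT) //= -sum_nat_const.
    apply: leq_sum => a _; have := hn a; rewrite /= => /negbT; rewrite -ltnNge => hl.
    rewrite -ltnS prednK // sum1dep_card; apply: leq_trans _ hl; rewrite ltnS eq_leq //.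
  move=> h2; have := leq_trans hV h2.
  case: (posnP #|A|) => [hA|hA]; first by move: (card0_eq hA (c set0)); rewrite inE.
  rewrite leq_mul2l; case/orP => [/eqP h0|]; first by rewrite h0 in hA.
  by rewrite -{1}(prednK hpos) ltnn.
exists [set x in V | chi x == a]; split.
  by apply: subset_trans hVW; apply/subsetP => x; rewrite inE => /andP [].
split => //.
suff key : forall Y : {set I}, Y \subset [set x in V | chi x == a] -> #|Y| = l.+1 -> c Y = a.
  by move=> Y1 Y2 h1 h2 c1 c2; rewrite key // key.
move=> Y hY hYc.
have : 0 < #|Y| by rewrite hYc.
move/card_gt0P => [y0 y0Y].
case: (arg_minnP rho y0Y) => u hu hmin.
have hYV : Y \subset V by apply: subset_trans hY _; apply/subsetP => x; rewrite inE => /andP [].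
rewrite (hc Y u hYV hYc hu hmin).
by have := subsetP hY u hu; rewrite inE => /andP [_ /eqP].
Qed.

Lemma mramsey L h : exists N, forall (I : finType) (c : {set I} -> A) (W : {set I}),
  N <= #|W| -> exists H : {set I}, H \subset W /\ h <= #|H| /\ forall l, l <= L -> homog c H l.
Proof.
elim: L h => [|L IH] h.
  have [N hN] := ramsey 0 h.
  exists N => I c W hW; have [H [s [cH hom]]] := hN I c W hW.
  by exists H; split => //; split => // l; rewrite leqn0 => /eqP ->.
have [N1 hN1] := IH h.
have [N hN] := ramsey L.+1 N1.
exists N => I c W hW.
have [H1 [s1 [c1 hom1]]] := hN I c W hW.
have [H [s [cH hom]]] := hN1 I c H1 c1.
exists H; split; first exact: subset_trans s s1.
split => // l; rewrite leq_eqVlt ltnS; case/orP => [/eqP->|hl]; last exact: hom.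
by move=> Y1 Y2 y1 y2; apply: hom1; apply: subset_trans s.
Qed.

End Ramsey.


Lemma cardsU_dis (I : finType) (X Y : {set I}) : [disjoint X & Y] -> #|X :|: Y| = #|X| + #|Y|.
Proof. by move=> d; rewrite cardsU; move: d; rewrite -setI_eq0 => /eqP ->; rewrite cards0 subn0. Qed.

Section Comb.
Variable A : finType.

Definition Xs (I : finType) n (beta : I -> option 'I_n.+1) (S : {set I}) (s : 'I_n.+1 -> bool)
  : {set I} := [set j | match beta j with Some i => s i | None => j \in S end].

Definition CTC (I : finType) (n : nat) (F : {set I} -> A) :=
  forall (beta : I -> option 'I_n.+1) S, (forall s, (exists i, i != ord0 /\ s i = false) ->
     F (Xs beta S (upd0 s false)) = F (Xs beta S (upd0 s true))) ->
  F (Xs beta S (fun i => i != ord0)) = F (Xs beta S (fun _ => true)).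

Lemma step (I : finType) n (F : {set I} -> A) (U C Y W : {set I}) :
  CTC n F -> C \subset U -> W \subset U -> [disjoint C & Y] -> [disjoint W & Y] ->
  [disjoint C & W] -> #|W| = n ->
  (forall D : {set I}, D \subset W -> D != set0 -> F ((U :\: (Y :|: D)) :\: C) = F (U :\: (Y :|: D))) ->
  F ((U :\: Y) :\: C) = F (U :\: Y).
Proof.
move=> hF hCU hWU dCY dWY dCW hWn hD.
pose w := enum W.
have sw : size w = n by rewrite -cardE.
pose blk (j : I) : 'I_n.+1 := inord (index j w).+1.
pose beta (j : I) := if j \in C then Some ord0 else if j \in W then Some (blk j) else None.
pose S := ((U :\: Y) :\: C) :\: W.
have blk0 : forall j, j \in W -> blk j != ord0.
  move=> j jW; rewrite /blk; apply/eqP => /(congr1 val) /=; rewrite inordK //.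
  by rewrite ltnS -sw index_mem mem_enum.
have form : forall s, Xs beta S s =
    (U :\: (Y :|: [set j in W | ~~ s (blk j)])) :\: (if s ord0 then set0 else C).
  move=> s; apply/setP => j; rewrite /Xs /beta inE.
  case jC: (j \in C).
    have jU : j \in U := subsetP hCU j jC.
    have jY : j \in Y = false := disjointFr dCY jC.
    have jW : j \in W = false := disjointFr dCW jC.
    by case: (s ord0); rewrite !inE ?jC ?jY ?jW ?jU.
  case jW: (j \in W).
    have jU : j \in U := subsetP hWU j jW.
    have jY : j \in Y = false := disjointFr dWY jW.
    by case: (s ord0); rewrite !inE ?jC ?jY ?jW ?jU /=; case: (s (blk j)).
  by case: (s ord0); rewrite !inE ?jC ?jW /= ?orbF.
have := hF beta S.
rewrite !form /=.
have e1 : [set j in W | ~~ (blk j != ord0)] = set0.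
  by apply/setP => j; rewrite !inE; case jW: (j \in W) => //=; rewrite blk0.
have e2 : [set j in W | ~~ true] = set0 by apply/setP => j; rewrite !inE andbF.
rewrite e1 e2 setU0 setD0 => -> //.
move=> s [i [hi hs]].
have eqD : forall c, [set j in W | ~~ upd0 s c (blk j)] = [set j in W | ~~ s (blk j)].
  move=> c; apply/setP => j; rewrite !inE /upd0; case jW: (j \in W) => //=.
  by rewrite (negbTE (blk0 j jW)).
rewrite !form !eqD /upd0 eqxx /= setD0; apply: hD.
  by apply/subsetP => j; rewrite inE => /andP [].
have ipos : 0 < i by rewrite lt0n.
have hi1 : i.-1 < size w by rewrite sw -ltnS prednK // ltn_ord.
have [x0 _] : exists x0 : I, x0 \in W.
  by apply/card_gt0P; rewrite hWn -sw (leq_ltn_trans (leq0n _) hi1).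
have nW : nth x0 w i.-1 \in W by rewrite -mem_enum mem_nth.
apply/set0Pn; exists (nth x0 w i.-1); rewrite inE nW /=.
have -> : blk (nth x0 w i.-1) = i.
  apply: val_inj; rewrite /blk /= inordK; last by rewrite index_uniq ?enum_uniq // prednK.
  by rewrite index_uniq ?enum_uniq // prednK.
by rewrite hs.
Qed.

End Comb.


Lemma removal (A : finType) (n : nat) : exists R, forall (I : finType) (F : {set I} -> A),
  CTC n F -> forall U : {set I}, R <= #|U| ->
  exists C : {set I}, C \subset U /\ C != set0 /\ F (U :\: C) = F U.
Proof.
pose K := #|{ffun 'I_n.+1 -> A}|.
have [N hN] := mramsey A (K + n) (K + K + n).
exists N => I F hF U hU.
have [H [hHU [hH hom]]] := hN I (fun Y => F (U :\: Y)) U hU.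
pose Phi l := F (U :\: firstl H l).
have homP : forall Y : {set I}, Y \subset H -> #|Y| <= K + n -> F (U :\: Y) = Phi #|Y|.
  move=> Y hY hc; apply: (hom #|Y|) => //; first exact: firstl_sub.
  by rewrite card_firstl //; apply: subset_leq_card.
pose g (k : 'I_K.+1) := [ffun i : 'I_n.+1 => Phi (k + i)].
have : ~~ injectiveb g.
  by apply/negP => /injectiveP /leq_card; rewrite card_ord ltnn.
move/injectivePn => [x [y xy gxy]].
wlog lxy : x y xy gxy / x < y.
  move=> hw; case: (ltngtP x y) => h; [exact: hw h | | ].
    by apply: (hw y x) => //; rewrite eq_sym.
  by move: xy; rewrite (val_inj h) eqxx.
pose k1 := nat_of_ord x; pose k2 := nat_of_ord y; pose p := k2 - k1.
have hk2 : k2 <= K by rewrite -ltnS ltn_ord.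
have hp : 0 < p by rewrite subn_gt0.
have hpK : p <= K by apply: leq_trans (leq_subr _ _) hk2.
pose C := firstl H p.
have hCH : C \subset H := firstl_sub H p.
have hCc : #|C| = p by rewrite card_firstl //; apply: leq_trans hpK _; apply: leq_trans _ hH;
  rewrite -addnA leq_addr.
pose Z := H :\: C.
pose E (Y : {set I}) := F ((U :\: Y) :\: C) = F (U :\: Y).
have hZH : Z \subset H by apply: subsetDl.
have dZC : forall Y : {set I}, Y \subset Z -> [disjoint Y & C].
  move=> Y hY; rewrite disjoints_subset; apply/subsetP => j jY; rewrite inE.
  by apply/negP => jC; have := subsetP hY j jY; rewrite inE jC.
have known : forall Y : {set I}, Y \subset Z -> k1 <= #|Y| -> #|Y| <= k1 + n -> E Y.
  move=> Y hY h1 h2; rewrite /E setDDl.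
  have hYC : #|Y :|: C| = #|Y| + p by rewrite cardsU_dis ?hCc // dZC.
  have hYH : Y \subset H := subset_trans hY hZH.
  have hx : k1 < k2 := lxy.
  have hYU : Y :|: C \subset H by rewrite subUset hYH hCH.
  rewrite (homP (Y :|: C)) // ?hYC; last by rewrite /p; lia.
  rewrite (homP Y) //; last by lia.
  have := congr1 (fun f : {ffun 'I_n.+1 -> A} => f (inord (#|Y| - k1))) gxy; rewrite /g !ffunE inordK;
    last by rewrite ltnS leq_subLR.
  have -> : k1 + (#|Y| - k1) = #|Y| by lia.
  move=> ->; congr Phi; rewrite /p; lia.
have all : forall j (Y : {set I}), Y \subset Z -> k1 + n <= #|Y| + j -> #|Y| <= k1 + n -> E Y.
  elim => [|j IH] Y hY h1 h2.
    by apply: known => //; apply: leq_trans (leq_addr n _) _; rewrite -(addn0 #|Y|).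
  case: (leqP k1 #|Y|) => hk; first exact: known.
  pose W := firstl (Z :\: Y) n.
  have hZY : n <= #|Z :\: Y|.
    rewrite (cardsDS hY) (cardsDS hCH) hCc.
    have : x < K.+1 := ltn_ord x. rewrite -/k1 => hx. lia.
  have hWZ : W \subset Z :\: Y := firstl_sub _ _.
  have hWc : #|W| = n := card_firstl hZY.
  have hWZ' : W \subset Z by apply: subset_trans hWZ (subsetDl _ _).
  have hZU : Z \subset U := subset_trans hZH hHU.
  apply: (step hF (W := W)) => //.
  - exact: subset_trans hCH hHU.
  - exact: subset_trans hWZ' hZU.
  - by rewrite disjoint_sym dZC.
  - rewrite disjoints_subset; apply/subsetP => u uW; rewrite inE.
    by apply/negP => uY; have := subsetP hWZ u uW; rewrite inE uY.
  - by rewrite disjoint_sym dZC.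
  move=> D hDW hD0; apply: IH.
  - by rewrite subUset hY /=; apply: subset_trans hDW hWZ'.
  - have dYD : [disjoint Y & D].
      rewrite disjoint_sym disjoints_subset; apply/subsetP => u uD; rewrite inE.
      by apply/negP => uY; have := subsetP hWZ u (subsetP hDW u uD); rewrite inE uY.
    rewrite cardsU_dis //; have : 0 < #|D| by rewrite card_gt0.
    lia.
  - have dYD : [disjoint Y & D].
      rewrite disjoint_sym disjoints_subset; apply/subsetP => u uD; rewrite inE.
      by apply/negP => uY; have := subsetP hWZ u (subsetP hDW u uD); rewrite inE uY.
    rewrite cardsU_dis //; have : #|D| <= n by rewrite -hWc; apply: subset_leq_card.
    lia.
have := all (k1 + n) set0 (sub0set _); rewrite cards0 add0n => /(_ (leqnn _) (leq0n _)).
rewrite /E !setD0 => hE.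
exists C; split; first exact: subset_trans hCH hHU.
split => //; by rewrite -card_gt0 hCc.
Qed.


Definition TCeq (A : Type) (Al : alg A) (n : nat) :=
  forall (k : 'I_n.+1 -> nat) (f : ({i : 'I_n.+1 & 'I_(k i)} -> A) -> A), is_pol Al f ->
  forall (a b : forall i : 'I_n.+1, 'I_(k i) -> A),
  (forall s, (exists i, i != ord0 /\ s i = false) ->
     f (sel a b (upd0 s false)) = f (sel a b (upd0 s true))) ->
  f (sel a b (fun i => i != ord0)) = f (sel a b (fun _ => true)).

Lemma sn_tc (A : Type) (Al : alg A) n :
  (forall x y : A, hcomm Al (fun _ : 'I_n.+1 => @full_rel A) x y <-> x = y) -> TCeq Al n.
Proof.
move=> hs k f hf a b hyp; apply/hs => delta hcong hTC.
apply: (hTC k f hf a b) => // s hs'; rewrite hyp //.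
by case: hcong => refl _ _ _; exact: refl.
Qed.

Lemma tc_ctc (A : finType) (Al : alg A) n (z : A) : TCeq Al n ->
  forall m (f : ('I_m -> A) -> A), Pol Al f -> forall r,
  CTC n (fun X : {set 'I_m} => f (restr z r X)).
Proof.
move=> tc m f hf r beta S hyp.
pose k := fun _ : 'I_n.+1 => m.
pose g (x : {i : 'I_n.+1 & 'I_(k i)} -> A) := f (fun j => match beta j with
   Some i => x (existT _ i j) | None => if j \in S then r j else z end).
pose a := fun (i : 'I_n.+1) (j : 'I_(k i)) => z.
pose b := fun (i : 'I_n.+1) (j : 'I_(k i)) => r j.
have key : forall s, g (sel a b s) = f (restr z r (Xs beta S s)).
  move=> s; rewrite /g; congr f; apply: functional_extensionality => j.
  by rewrite /restr /Xs inE /sel /=; case: (beta j).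
have hg : is_pol Al g.
  apply: (pol_comp hf (s := fun j x => match beta j with
   Some i => x (existT _ i j) | None => if j \in S then r j else z end)) => j.
  case: (beta j) => [i|]; [exact: pol_proj | exact: pol_const].
rewrite -!key; apply: (tc k g hg a b) => s hs; rewrite !key; exact: hyp.
Qed.

Lemma forward (A : finType) (Al : alg A) (z : A) : supernilpotent Al ->
  exists d : nat, 0 < d /\
     forall (m : nat) (f : ('I_m -> A) -> A), Pol Al f ->
       forall r : 'I_m -> A,
         exists T : {set 'I_m}, #|T| <= d /\ f r = f (restr z r T).
Proof.
move=> [n hn]; have tc := sn_tc hn; have [R hR] := removal A n.
exists R.+1; split => // m f hf r.
pose F X := f (restr z r X).
have hF : CTC n F := @tc_ctc A Al n z tc m f hf r.
suff : forall s (U : {set 'I_m}), #|U| <= s -> exists T : {set 'I_m}, #|T| <= R.+1 /\ F U = F T.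
  move=> /(_ #|[set: 'I_m]| setT (leqnn _)) [T [hT e]]; exists T; split => //.
  have -> : f (restr z r T) = F T by [].
  rewrite -e /F; congr f; apply: functional_extensionality => j; by rewrite /restr in_setT.
elim => [|s IH] U hU.
  by exists U; split => //; apply: leq_trans hU _.
case: (leqP #|U| R.+1) => hs; first by exists U.
have [C [hCU [hC0 e]]] := hR _ F hF U (ltnW (ltnW hs)).
have : #|U :\: C| <= s.
  rewrite (cardsDS hCU); have : 0 < #|C| by rewrite card_gt0.
  lia.
move/IH => [T [hT eT]]; exists T; split => //; by rewrite -e.
Qed.

Lemma backward (A : finType) (Al : alg A) (z : A) : has_malcev Al ->
  (exists d : nat, 0 < d /\
     forall (m : nat) (f : ('I_m -> A) -> A), Pol Al f ->
       forall r : 'I_m -> A,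
         exists T : {set 'I_m}, #|T| <= d /\ f r = f (restr z r T)) -> supernilpotent Al.
Proof.
move=> [mt hm] [d [hd Dp]]; exists d => x y; split; last first.
  by move=> <- delta [refl _ _ _] _; exact: refl.
move=> h; apply: h.
  split; [by [] | exact: @esym | exact: @etrans |].
  by move=> i x0 y0 hxy; congr op; apply: functional_extensionality.
move=> k f hf a b _ hyp.
exact: (back hm hf hyp Dp).
Qed.

Theorem mainTheorem3 (A : finType) (Al : alg A) (z : A) :
  has_malcev Al ->
  (supernilpotent Al <->
   exists d : nat, 0 < d /\
     forall (m : nat) (f : ('I_m -> A) -> A), Pol Al f ->
       forall r : 'I_m -> A,
         exists T : {set 'I_m}, #|T| <= d /\ f r = f (restr z r T)).
Proof.
move=> hm; split; [exact: forward | exact: backward].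
Qed.
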